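(* If $T$ is a tree of maximum degree at most $3$, then $\gamma_e(T)\geq\frac{1}{6}(n(T)+2)$.
   Context: All graphs are finite, simple and undirected; $n(G)=|V(G)|$. For a graph $G$, a set $S\subseteq V(G)$, and vertices $u,v$ with $u\in S$ or $v\in S$, ${\rm dist}_{(G,S)}(u,v)$ is the minimum number of edges of a path $P$ in $G$ between $u$ and $v$ such that $S$ contains exactly one endvertex of $P$ and no internal vertex of $P$, and $\infty$ if no such path exists (so ${\rm dist}_{(G,S)}(u,u)=0$ for $u\in S$). For $u\in V(G)$, $w_{(G,S)}(u)=\sum_{v\in S}(1/2)^{{\rm dist}_{(G,S)}(u,v)-1}$ with $(1/2)^{\infty}=0$. $S$ is an exponential dominating set of $G$ if $w_{(G,S)}(u)\geq 1$ for every $u\in V(G)$, and $\gamma_e(G)$ is the minimum cardinality of an exponential dominating set of $G$. *)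

(* Defs.v *)
From HB Require Import structures.
From mathcomp Require Import all_boot all_order all_algebra.
Set Implicit Arguments. Unset Strict Implicit. Unset Printing Implicit Defensive.
Import Order.TTheory GRing.Theory Num.Theory.

Definition simple_graph (T : finType) (e : rel T) : Prop :=
  symmetric e /\ irreflexive e.

Definition connected_graph (T : finType) (e : rel T) : Prop :=
  forall x y : T, connect e x y.

Definition acyclic_graph (T : finType) (e : rel T) : Prop :=
  forall c : seq T, 3 <= size c -> uniq c -> ~~ cycle e c.

Definition is_tree (T : finType) (e : rel T) : Prop :=
  [/\ simple_graph e, 0 < #|T|, connected_graph e & acyclic_graph e].

Definition deg (T : finType) (e : rel T) (x : T) : nat := #|[set y | e x y]|.

Definition max_deg_le (T : finType) (e : rel T) (k : nat) : Prop :=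
  forall x : T, deg e x <= k.

(* u :: p is a path in G from u to v, with exactly one endvertex in S and no
   internal vertex in S (for the trivial path u = v its unique endvertex
   must lie in S). *)
Definition spath (T : finType) (e : rel T) (S : {set T}) (u v : T)
    (p : seq T) : bool :=
  [&& path e u p, last u p == v, uniq (u :: p) &
      if p is [::] then u \in S
      else ((u \in S) != (v \in S)) && all (fun x => x \notin S) (behead (belast u p))].

Definition spath_len (T : finType) (e : rel T) (S : {set T}) (u v : T)
    (k : nat) : bool :=
  [exists t : k.-tuple T, spath e S u v t].

(* dist_(G,S)(u,v): the minimum number of edges of such a path, None = oo.
   A path (uniq vertex list) has fewer than #|T| edges, so searching
   k in [0, #|T|) is exhaustive. *)
Definition sdist (T : finType) (e : rel T) (S : {set T}) (u v : T)
    : option nat :=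
  let k := find (spath_len e S u v) (iota 0 #|T|) in
  if k < #|T| then Some k else None.

Definition expweight (T : finType) (e : rel T) (S : {set T}) (u : T) : rat :=
  \sum_(v in S)
    match sdist e S u v with
    | Some d => ((1 / 2 : rat) ^ (d%:Z - 1))%R
    | None => 0%R
    end.

Definition exp_dominating (T : finType) (e : rel T) (S : {set T}) : Prop :=
  forall u : T, (1 <= expweight e S u)%R.

Definition exp_dominatingb (T : finType) (e : rel T) (S : {set T}) : bool :=
  [forall u : T, (1 <= expweight e S u)%R].

(* gamma_e(G): minimum cardinality of an exponential dominating set
   (V(G) itself is one, so the default #|T| never exceeds the true min). *)
Definition gamma_e (T : finType) (e : rel T) : nat :=
  \big[minn/#|T|]_(S : {set T} | exp_dominatingb e S) #|S|.

(* Main.v *)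
Require Import Defs.
From HB Require Import structures.
From mathcomp Require Import all_boot all_order all_algebra zify lra.
Set Implicit Arguments. Unset Strict Implicit. Unset Printing Implicit Defensive.
Import Order.TTheory GRing.Theory Num.Theory.

Lemma split_mem (T : eqType) (p : seq T) (y : T) :
  y \in p -> exists p1 p2, p = p1 ++ y :: p2.
Proof. by move=> /splitPr [p1 p2]; exists p1, p2. Qed.

Section Forest.
Variables (T : finType) (e : rel T).
Hypotheses (e_sym : symmetric e) (eirr : irreflexive e)
  (eacyc : acyclic_graph e).

Lemma sum_card (A : {set T}) (P : pred T) :
  \sum_(y in A) (P y : nat) = #|[set y in A | P y]|.
Proof.
rewrite -sum1_card big_mkcond [RHS]big_mkcond; apply eq_bigr => y _.
by rewrite !inE; case: (y \in A); case: (P y).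
Qed.

Lemma pred_unique x s y :
  y \in x :: s -> e (last x s) y -> uniq (x :: s) -> path e x s ->
  exists p1, x :: s = p1 ++ [:: y; last x s].
Proof.
move=> /split_mem [p1 [p2 E]] ezy hu hp.
have hl : last x s = last y p2.
  by rewrite -[last x s]/(last x (x :: s)) E last_cat.
have hp2 : path e y p2.
  case: p1 E => [|a p1] /= [E1 E2]; first by rewrite -E1 -E2.
  by move: hp; rewrite E2 cat_path => /andP [_] /= /andP [].
have hu2 : uniq (y :: p2).
  by move: hu; rewrite E cat_uniq => /andP [_ /andP [_]].
case: p2 E hl hp2 hu2 => [|w [|w' p2]] E hl hp2 hu2.
- by move: ezy; rewrite hl /= eirr.
- by exists p1; rewrite E hl.
- have := eacyc (c := [:: y, w, w' & p2]) isT hu2.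
  by rewrite /cycle rcons_path hp2 -hl ezy.
Qed.

Lemma no_min2 (A : {set T}) : A != set0 ->
  ~ (forall z, z \in A -> 1 < #|[set y in A | e z y]|).
Proof.
move=> /set0Pn [x0 x0A] H.
have ext : forall m, exists x s, size s = m /\
    [&& x \in A, all (mem A) s, uniq (x :: s) & path e x s].
  elim=> [|m [x [s [hs /and4P [xA sA hu hp]]]]].
    by exists x0, [::]; rewrite x0A.
  have zA : last x s \in A.
    by move: (mem_last x s); rewrite inE => /orP [/eqP -> //| /(allP sA)].
  have [y1 [y2 [h1 h2 hne]]] := card_gt1P (H _ zA).
  move: h1 h2; rewrite !inE => /andP [y1A e1] /andP [y2A e2].
  case: (boolP (y1 \in x :: s)) => i1; last first.
    exists x, (rcons s y1); rewrite size_rcons hs; split=> //.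
    rewrite xA all_rcons sA andbT rcons_path hp e1 -rcons_cons rcons_uniq i1 hu.
    by rewrite /= andbT; apply: y1A.
  case: (boolP (y2 \in x :: s)) => i2; last first.
    exists x, (rcons s y2); rewrite size_rcons hs; split=> //.
    rewrite xA all_rcons sA andbT rcons_path hp e2 -rcons_cons rcons_uniq i2 hu.
    by rewrite /= andbT; apply: y2A.
  have [q1 E1] := pred_unique i1 e1 hu hp.
  have [q2 E2] := pred_unique i2 e2 hu hp.
  have := congr1 (fun l => head y1 (behead (rev l))) (etrans (esym E1) E2).
  rewrite /= !rev_cat /= => E; by rewrite E eqxx in hne.
have [x [s [hs /and4P [_ _ hu _]]]] := ext #|T|.
have := max_card (mem (x :: s)).
by rewrite (card_uniqP hu) /= hs ltnn.
Qed.

Definition E2 (A : {set T}) := \sum_(x in A) \sum_(y in A) (e x y : nat).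

Lemma forest_E2 n (A : {set T}) : #|A| = n.+1 -> E2 A + 2 <= 2 * #|A|.
Proof.
elim: n A => [|n IH] A hA.
  have [z Az] : exists z, A = [set z] by apply/cards1P; rewrite hA.
  by rewrite /E2 Az big_set1 big_set1 eirr cards1.
have An : A != set0 by rewrite -card_gt0 hA.
have [z zA dz] : exists2 z, z \in A & #|[set y in A | e z y]| <= 1.
  case: (boolP [exists z in A, #|[set y in A | e z y]| <= 1]).
    by move=> /exists_inP [z zA dz]; exists z.
  move=> /exists_inPn H; exfalso; apply: (no_min2 An) => z zA.
  by rewrite ltnNge H.
set B := A :\ z.
have hB : #|B| = n.+1 by move: hA; rewrite (cardsD1 z A) zA add1n => -[].
have EA : E2 A = 2 * #|[set y in A | e z y]| + E2 B.
  rewrite /E2 (bigD1 z zA) /=.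
  have -> : \sum_(i in A | i != z) \sum_(y in A) (e i y : nat) =
      \sum_(i in B) ((e i z : nat) + \sum_(y in B) (e i y : nat)).
    apply: eq_big => [i|i]; first by rewrite !inE andbC.
    by move=> _; rewrite (bigD1 z zA) /=; congr (_ + _); apply: eq_bigl => y; rewrite !inE andbC.
  rewrite big_split /= -sum_card.
  have -> : \sum_(i in B) (e i z : nat) = \sum_(y in A) (e z y : nat).
    rewrite [RHS](bigD1 z zA) /= eirr add0n; apply: eq_big => [i|i _].
      by rewrite !inE andbC.
    by rewrite e_sym.
  by rewrite addnA mul2n addnn.
rewrite EA; have := IH B hB; rewrite hB hA; lia.
Qed.

Lemma forest_deg : 0 < #|T| ->
  \sum_(x : T) deg e x + 2 <= 2 * #|T|.
Proof.
move=> hT.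
have -> : \sum_(x : T) deg e x = E2 [set: T].
  rewrite /E2; apply: eq_big => [x|x _]; first by rewrite inE.
  rewrite sum_card /deg; apply: eq_card => y; by rewrite !inE.
rewrite -cardsT; case hn : #|[set: T]| => [|n]; first by move: hT; rewrite -cardsT hn.
by rewrite -hn; apply: (forest_E2 hn).
Qed.

End Forest.

Section H.
Local Open Scope ring_scope.

Definition h (d : nat) : rat := (1 / 2 : rat) ^ (d%:Z - 1).

Lemma hS d : h d.+1 = (1/2) ^+ d.
Proof. by rewrite /h intS addrAC subrr add0r. Qed.

Lemma h_ge0 d : 0 <= h d.
Proof. by rewrite /h exprz_ge0. Qed.

Lemma telescope (Lf Af : nat -> nat) :
  Lf 0 = 0%N -> (forall d, (0 < d)%N -> (Af d.+1 + Lf d <= 2 * Af d)%N) ->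
  forall m, \sum_(d < m.+1) h d * (Lf d)%:R + 2 * h m.+1 * (Af m.+1)%:R
    <= 2 * (Af 1%N)%:R.
Proof.
move=> L0 hstep; elim=> [|m IH].
  by rewrite big_ord1 L0 mulr0 add0r hS expr0 mulr1.
rewrite big_ord_recr /=.
have := hstep m.+1 isT; rewrite -(ler_nat rat) natrD natrM => hs.
have hp : 0 <= h m.+1 by rewrite hS exprn_ge0.
have e2 : h m.+2 = h m.+1 / 2 by rewrite !hS exprS mulrC mul1r.
apply: le_trans IH; rewrite -addrA lerD2l e2.
have := ler_wpM2l hp hs.
rewrite mulrDr; lra.
Qed.

Lemma telescope2 (Lf Af : nat -> nat) :
  Lf 0 = 0%N -> (forall d, (0 < d)%N -> (Af d.+1 + Lf d <= 2 * Af d)%N) ->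
  forall m, \sum_(d < m) h d * (Lf d)%:R <= 2 * (Af 1%N)%:R.
Proof.
move=> L0 hs [|m]; first by rewrite big_ord0 mulr_ge0.
have := telescope L0 hs m; apply: le_trans.
by rewrite lerDl !mulr_ge0 ?h_ge0.
Qed.
End H.

Section Dist.
Variables (T : finType) (e : rel T) (S : {set T}) (v : T).
Hypotheses (e_sym : symmetric e) (eirr : irreflexive e) (vS : v \in S).

Lemma sdist_spec u d : sdist e S u v = Some d ->
  spath_len e S u v d /\ forall k, k < d -> ~~ spath_len e S u v k.
Proof.
rewrite /sdist; case: ifP => // hlt [<-]; split.
  have := nth_find 0 (a := spath_len e S u v) (s := iota 0 #|T|).
  rewrite has_find size_iota nth_iota //; by move=> /(_ hlt).
move=> k hk; have := before_find 0 hk; rewrite nth_iota ?add0n ?hk //.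
  by move=> ->.
by apply: ltn_trans hk hlt.
Qed.

Lemma spath_len_lt u k : spath_len e S u v k -> k < #|T|.
Proof.
move=> /existsP [t /and4P [_ _ hu _]].
have := max_card (mem (u :: t)); by rewrite (card_uniqP hu) /= size_tuple.
Qed.

Lemma sdist_ex u k : spath_len e S u v k ->
  exists2 d, sdist e S u v = Some d & d <= k.
Proof.
move=> hk; have hkT := spath_len_lt hk.
have hf : find (spath_len e S u v) (iota 0 #|T|) <= k.
  rewrite leqNgt; apply/negP => /(before_find 0).
  by rewrite nth_iota // hk.
exists (find (spath_len e S u v) (iota 0 #|T|)) => //.
by rewrite /sdist (leq_ltn_trans hf hkT).
Qed.

Definition good u p := [&& path e u p, last u p == v, uniq (u :: p)
  & all (fun x => (x == v) || (x \notin S)) p].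

Lemma spath_good u p : u \notin S -> spath e S u v p = good u p.
Proof.
move=> uS; rewrite /spath /good; case: p => [|y p] /=.
  by case: (u =P v) => [E|_] /=; [rewrite E vS in uS | ].
rewrite (negbTE uS) vS /=.
case hp: (_ && path e y p) => //=.
case hl: (last y p == v) => //=.
case hc: [&& u \notin y :: p, y \notin p & uniq p] => //=.
have hu : uniq (y :: p) by case/and3P: hc => _ h1 h2; rewrite /= h1 h2.
rewrite -[_ && all _ p]/(all (fun x => (x == v) || (x \notin S)) (y :: p)).
move: hu; rewrite lastI rcons_uniq all_rcons => /andP [hn _].
rewrite (eqP hl) eqxx /=; apply: eq_in_all => x xb.
by have -> : (x == v) = false by apply/eqP => E; move: hn; rewrite (eqP hl) -E xb.
Qed.

Lemma len_good u k : u \notin S -> spath_len e S u v k ->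
  exists p, size p = k /\ good u p.
Proof.
move=> uS /existsP [t]; rewrite spath_good // => h.
by exists t; rewrite size_tuple.
Qed.

Lemma good_len u p : u \notin S -> good u p -> spath_len e S u v (size p).
Proof.
move=> uS h; apply/existsP; exists (in_tuple p); by rewrite spath_good.
Qed.


Lemma good_suffix x s1 w s2 : good x (s1 ++ w :: s2) -> good w s2.
Proof.
move=> /and4P [hp hl hu ha]; apply/and4P; split.
- by move: hp; rewrite cat_path => /andP [_] /= /andP [].
- by rewrite last_cat /= in hl.
- by move: hu; rewrite -cat_cons cat_uniq => /and3P [_ _].
- by move: ha; rewrite all_cat => /andP [_] /= /andP [].
Qed.

Lemma good_cons w x s : e w x -> w \notin x :: s -> x \notin S -> good x s ->
  good w (x :: s).
Proof.
move=> ewx hw xS /and4P [hp hl hu ha]; apply/and4P; split => //=.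
- by rewrite ewx hp.
- by rewrite hw; exact: hu.
- by rewrite xS orbT ha.
Qed.

Lemma good_tail w x s : good w (x :: s) -> x \notin S -> good x s.
Proof.
move=> /and4P [hp hl hu ha] xS; apply/and4P; split => //=.
- by case/andP: hp.
- by case/andP: hu.
- by case/andP: ha.
Qed.

Definition N d := [set u | (u \notin S) && (sdist e S u v == Some d)].

Lemma N0 : N 0 = set0.
Proof.
apply/setP => u; rewrite !inE; apply/negP => /andP [uS /eqP /sdist_spec [h _]].
have [p [hs /and4P [_ hl _ _]]] := len_good uS h.
move: hs hl; case: p => //= _ /eqP E; by rewrite E vS in uS.
Qed.

Lemma N1 : #|N 1| <= deg e v.
Proof.
apply: subset_leq_card; apply/subsetP => u; rewrite !inE.
move=> /andP [uS /eqP /sdist_spec [h _]].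
have [p [hs /and4P [hp hl _ _]]] := len_good uS h.
move: hs hp hl; case: p => [|x [|//]] //= _; rewrite andbT => hux /eqP E.
by rewrite -E e_sym.
Qed.

Lemma F1 d w : 0 < d -> w \in N d.+1 -> exists2 p, p \in N d & e p w.
Proof.
move=> d0; rewrite inE => /andP [wS /eqP /sdist_spec [h hmin]].
have [t [hs hg]] := len_good wS h.
case: t hs hg => [|x1 [|x2 t]] //=; first by move=> [E]; rewrite -E in d0.
move=> [hs] hg.
have x1S : x1 \notin S.
  move: hg => /and4P [_ hl hu ha].
  move: ha => /= /andP [/orP [/eqP E|//] _]; exfalso.
  move: hu => /= /and4P [_ hx _ _].
  have hl2 : last x2 t = x1 by rewrite E; exact/eqP.
  have := mem_last x2 t; rewrite hl2 => hm.
  by rewrite hm in hx.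
have hg1 := good_tail hg x1S.
have [d' hd' led'] := sdist_ex (good_len x1S hg1).
rewrite /= hs in led'.
exists x1; last by move: hg => /and4P [/andP [+ _] _ _ _]; rewrite e_sym.
rewrite inE x1S hd' /=; apply/eqP; congr Some; apply/eqP.
rewrite eqn_leq led' /= leqNgt; apply/negP => hlt.
have [s [hss hgs]] := len_good x1S (proj1 (sdist_spec hd')).
move: hg => /and4P [hp0 _ hu0 _].
case: (boolP (w \in x1 :: s)) => hw.
  have hw' : w \in s.
    move: hw; rewrite inE => /orP [/eqP E|//].
    by move: hu0; rewrite /= -E inE eqxx.
  have [s1 [s2 Es]] := split_mem hw'.
  rewrite Es in hgs; have hg2 := good_suffix hgs.
  have : ~~ spath_len e S w v (size s2).
    apply: hmin; apply: (@leq_ltn_trans d'); last by apply: (ltn_trans hlt).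
    by rewrite -hss Es size_cat /=; lia.
  by rewrite good_len.
have hg3 : good w (x1 :: s).
  by apply: good_cons => //; case/andP: hp0.
have : ~~ spath_len e S w v (size (x1 :: s)) by apply: hmin; rewrite /= hss ltnS.
by rewrite good_len.
Qed.

Lemma F2 d p : 0 < d -> p \in N d -> exists2 q, e p q & q \notin N d.+1.
Proof.
move=> d0; rewrite inE => /andP [pS /eqP /sdist_spec [h _]].
have [t [hs hg]] := len_good pS h.
case: t hs hg => [|q t] //=; first by move=> E; rewrite -E in d0.
move=> hs hg; exists q; first by move: hg => /and4P [/andP [+ _] _ _ _].
rewrite inE negb_and negbK; case: (boolP (q \in S)) => //= qS.
have [d' hd' led'] := sdist_ex (good_len qS (good_tail hg qS)).
by rewrite hd'; apply/eqP => -[E]; move: led' hs; rewrite E; lia.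
Qed.

Definition L d := \sum_(u in N d) (3 - deg e u).

Lemma level_count d : 0 < d -> (forall x, deg e x <= 3) ->
  #|N d.+1| + L d <= 2 * #|N d|.
Proof.
move=> d0 hdeg.
pose par w := odflt w [pick p in N d | e p w].
have hpar : forall w, w \in N d.+1 -> (par w \in N d) && e (par w) w.
  move=> w /(F1 d0) [p pN epw]; rewrite /par; case: pickP => [q /= -> //|].
  by move=> /(_ p); rewrite pN epw.
have fib : forall p, p \in N d ->
    \sum_(w | (w \in N d.+1) && (par w == p)) 1 + (3 - deg e p) <= 2.
  move=> p pN; rewrite sum1dep_card.
  have [q epq qN] := F2 d0 pN.
  have hpr : [set w | (w \in N d.+1) && (par w == p)] \proper [set y | e p y].
    apply/properP; split.
      apply/subsetP => w; rewrite !inE => /andP [wN /eqP E].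
      have wN' : w \in N d.+1 by rewrite inE.
      by move: (hpar w wN') => /andP [_]; rewrite E.
    exists q; first by rewrite inE.
    by rewrite inE; apply/negP => /andP [h _]; rewrite h in qN.
  have := proper_card hpr; have := hdeg p; rewrite /deg; lia.
rewrite -sum1_card (partition_big par (mem (N d))) /=; last first.
  by move=> w wN; case/andP: (hpar w wN).
rewrite /L -big_split /= mul2n -addnn -[X in _ <= X + _]sum1_card.
rewrite -[X in _ <= _ + X]sum1_card -big_split /=.
by apply: leq_sum => p pN; have := fib p pN; lia.
Qed.


Definition cw u := match sdist e S u v with Some d => h d | None => 0%R end.

Lemma sdist_lt u d : sdist e S u v = Some d -> d < #|T|.
Proof. by move=> /sdist_spec [/spath_len_lt]. Qed.

Local Open Scope ring_scope.

Lemma v_bound : (forall x, (deg e x <= 3)%N) ->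
  \sum_(u | u \notin S) (3 - deg e u)%:R * cw u <= 2 * (deg e v)%:R :> rat.
Proof.
move=> hdeg.
have step1 : forall u, (3 - deg e u)%:R * cw u = \sum_(d < #|T|)
    (if sdist e S u v == Some (d : nat) then (3 - deg e u)%:R * h d else 0).
  move=> u; rewrite /cw; case E: (sdist e S u v) => [d|]; last first.
    by rewrite big1 ?mulr0.
  have hd := sdist_lt E.
  rewrite (bigD1 (Ordinal hd)) //= eqxx big1 ?addr0 // => i ne.
  case: eqP => // -[E']; move: ne; have -> : i = Ordinal hd by apply/val_inj.
  by rewrite eqxx.
rewrite (eq_bigr _ (fun u _ => step1 u)) exchange_big /=.
have step2 : forall d : 'I_#|T|, \sum_(u | u \notin S)
    (if sdist e S u v == Some (d : nat) then (3 - deg e u)%:R * h d else 0)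
    = h d * (L d)%:R.
  move=> d; rewrite /L natr_sum mulr_sumr big_mkcond [RHS]big_mkcond.
  apply: eq_bigr => u _; rewrite inE.
  by case: (u \notin S); case: (sdist e S u v == Some (d : nat)); rewrite //= mulrC.
rewrite (eq_bigr _ (fun d _ => step2 d)).
have tel := telescope2 (Lf := L) (Af := fun d => #|N d|).
apply: le_trans (tel _ _ #|T|) _.
- by rewrite /L N0 // big_set0.
- by move=> d d0; apply: level_count.
- by rewrite ler_pM2l // ler_nat N1.
Qed.

End Dist.

Lemma key (T : finType) (e : rel T) (S : {set T}) :
  symmetric e -> irreflexive e -> acyclic_graph e -> (0 < #|T|)%N ->
  (forall x, (deg e x <= 3)%N) -> exp_dominatingb e S ->
  (#|T| + 2 <= 6 * #|S|)%N.
Proof.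
move=> esy eir eac hT hdeg /forallP hdom.
have hf := forest_deg esy eir eac hT.
have h3 : (\sum_x (3 - deg e x) + \sum_x deg e x = 3 * #|T|)%N.
  rewrite -big_split /= -[in RHS]sum1_card big_distrr /=.
  by apply: eq_bigr => x _; rewrite subnK ?hdeg // muln1.
have hsplit : (\sum_x (3 - deg e x) =
    \sum_(x in S) (3 - deg e x) + \sum_(x | x \notin S) (3 - deg e x))%N.
  exact: bigID.
have hns : (\sum_(x | x \notin S) (3 - deg e x) <= \sum_(x in S) 2 * deg e x)%N.
  rewrite -(ler_nat rat) !natr_sum.
  apply: le_trans (_ : \sum_(x | x \notin S) (3 - deg e x)%:R * expweight e S x <= _)%R.
    apply: ler_sum => x _; rewrite ler_peMr //; exact: hdom.
  have -> : (\sum_(x | x \notin S) (3 - deg e x)%:R * expweight e S x =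
      \sum_(v in S) \sum_(x | x \notin S) (3 - deg e x)%:R * cw e S v x :> rat)%R.
    rewrite exchange_big /=; apply: eq_bigr => x _; rewrite mulr_sumr.
    by apply: eq_bigr.
  apply: ler_sum => v vS; rewrite natrM; exact: v_bound.
have hs6 : (\sum_(x in S) (3 - deg e x) + \sum_(x in S) 2 * deg e x <= 6 * #|S|)%N.
  rewrite -big_split /= -sum1_card big_distrr /=.
  by apply: leq_sum => x _; have := hdeg x; lia.
move: hsplit hns hs6 h3 hf; lia.
Qed.

Theorem theorem4 (T : finType) (e : rel T) :
  is_tree e -> max_deg_le e 3 ->
  ((#|T| + 2)%:R / 6 <= (gamma_e e)%:R :> rat)%R.
Proof.
move=> [[esy eir] hT _ eac] hdeg.
have hg : (#|T| + 2 <= 6 * gamma_e e)%N.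
  rewrite /gamma_e; apply: (big_ind (fun x => #|T| + 2 <= 6 * x)%N).
  - by move: hT; lia.
  - move=> x y hx hy; case: (leqP x y) => hxy.
      by [].
    by [].
  - by move=> S hS; apply: key.
rewrite ler_pdivrMr // -(ler_nat rat) natrM in hg *.
by rewrite mulrC.
Qed.
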